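(* Let $G$ be a topological groupoid such that $G^{(0)}$ is Hausdorff and $r\colon G\to G^{(0)}$ is open, and let $Z$ be a locally compact space endowed with a continuous right action of $G$ with momentum map $p\colon Z\to G^{(0)}$. Then $\mathcal{H}Z$ carries a continuous right action of $G$ extending the one on $Z$: the momentum map is the unique continuous map $\mathcal{H}p\colon\mathcal{H}Z\to G^{(0)}$ with $S\subset p^{-1}(\mathcal{H}p(S))$, and $S\cdot g=\{sg: s\in S\}$ for $g\in G^{\mathcal{H}p(S)}$; in particular $\{z\}\cdot g=\{zg\}$.
   Context: Quasi-compact: every open cover has a finite subcover; locally compact: every point has a quasi-compact Hausdorff neighbourhood (not necessarily Hausdorff). $\mathcal{H}Z$ is the set of nonempty $S\subset Z$ such that every finite family of open sets each meeting $S$ has nonempty intersection, with the topology generated by $\{S:S\cap V\neq\emptyset\}$ ($V$ open) and $\{S:S\cap Q=\emptyset\}$ ($Q$ quasi-compact); $z\in Z$ is identified with $\{z\}$ (this inclusion need not be continuous). *)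

(* Defs.v *)
From HB Require Import structures.
From mathcomp Require Import all_boot all_classical all_reals all_analysis.

Set Implicit Arguments.
Unset Strict Implicit.
Unset Printing Implicit Defensive.

Local Open Scope classical_set_scope.

(** Topological groupoid with arrow space [G] and unit space [G0]
    (a separate type; [u] is the unit inclusion, which is a topological
    embedding since it is continuous with continuous left inverse [r]).
    [g] and [h] are composable (product [mul g h] = gh) iff [s g = r h]. *)
Definition is_top_groupoid (G G0 : topologicalType) (s r : G -> G0)
    (u : G0 -> G) (mul : G -> G -> G) (inv : G -> G) : Prop :=
  (forall x, s (u x) = x /\ r (u x) = x) /\
  (forall g h, s g = r h -> s (mul g h) = s h /\ r (mul g h) = r g) /\
  (forall g h k, s g = r h -> s h = r k ->
      mul (mul g h) k = mul g (mul h k)) /\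
  (forall g, mul (u (r g)) g = g /\ mul g (u (s g)) = g) /\
  (forall g, [/\ s (inv g) = r g, r (inv g) = s g,
                mul g (inv g) = u (r g) & mul (inv g) g = u (s g)]) /\
  [/\ continuous s, continuous r, continuous u & continuous inv] /\
  {within [set gh : G * G | s gh.1 = r gh.2],
    continuous (fun gh : G * G => mul gh.1 gh.2)}.

Definition is_right_action (G G0 X : topologicalType) (s r : G -> G0)
    (u : G0 -> G) (mul : G -> G -> G) (p : X -> G0) (act : X -> G -> X) : Prop :=
  [/\ continuous p,
      (forall x g, p x = r g -> p (act x g) = s g),
      (forall x, act x (u (p x)) = x),
      (forall x g h, p x = r g -> s g = r h ->
          act (act x g) h = act x (mul g h)) &
      {within [set xg : X * G | p xg.1 = r xg.2],
        continuous (fun xg : X * G => act xg.1 xg.2)}].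

(** Locally compact: every point has a quasi-compact neighbourhood which is
    Hausdorff in the subspace topology (the space itself need not be
    Hausdorff). *)
Definition hausdorff_subset (Z : topologicalType) (K : set Z) : Prop :=
  forall x y, K x -> K y -> x <> y ->
    exists U V : set Z, [/\ open U, open V, U x, V y & U `&` V `&` K = set0].

Definition locally_compact_sp (Z : topologicalType) : Prop :=
  forall z : Z, exists K : set Z, [/\ nbhs z K, compact K & hausdorff_subset K].

Definition isH (Z : topologicalType) (S : set Z) : Prop :=
  S !=set0 /\
  forall F : set (set Z), finite_set F ->
    (forall V, F V -> open V /\ V `&` S !=set0) ->
    \bigcap_(V in F) V !=set0.

Record HZ (Z : topologicalType) := MkHZ { hz_set : set Z; hz_prop : isH hz_set }.

Section HZtopology.
Context (Z : topologicalType).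


HB.instance Definition _ := gen_eqMixin (HZ Z).
HB.instance Definition _ := gen_choiceMixin (HZ Z).

Definition hz_subbase : set (set (HZ Z)) :=
  [set B | (exists V : set Z, open V /\
              B = [set S | hz_set S `&` V !=set0]) \/
           (exists Q : set Z, compact Q /\
              B = [set S | hz_set S `&` Q = set0])].

HB.instance Definition _ :=
  @isSubBaseTopological.Build (HZ Z) (set (HZ Z)) hz_subbase id.

Lemma isH_set1 (z : Z) : isH [set z].
Proof.
split; first by exists z.
move=> F _ HF; exists z => V FV.
by have [_ [y [Vy yz]]] := HF V FV; rewrite -yz.
Qed.

Definition hz_pt (z : Z) : HZ Z := MkHZ (isH_set1 z).

End HZtopology.

(* Main.v *)
Require Import Defs.
From HB Require Import structures.
From mathcomp Require Import all_boot all_classical all_reals all_analysis.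
Local Open Scope classical_set_scope.

Lemma hz_open (Z : topologicalType) (B : set (HZ Z)) : hz_subbase B -> open B.
Proof.
move=> hB. exists [set B]; first by move=> x ->; apply: finI_from1.
by rewrite bigcup_set1.
Qed.

Lemma hz_cvg (Z : topologicalType) (F : set_system (HZ Z)) (S : HZ Z) : Filter F ->
  (forall B, hz_subbase B -> B S -> F B) -> F --> S.
Proof.
move=> FF H A [B [oB BS BA]].
apply: (filterS BA).
case: oB => D' D'sub eB. move: BS; rewrite -eB => -[i Di iS].
have := D'sub i Di => -[E Esub Ei].
have HF : F i.
  rewrite -Ei; apply: filter_bigI => j jE; apply: H; first by have := Esub j jE; rewrite inE.
  by move: iS; rewrite -Ei; apply.
by apply: (filterS _ HF) => x Hx; exists i.
Qed.

Lemma onbhs (T : topologicalType) (x : T) (A : set T) : open A -> A x -> nbhs x A.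
Proof. by move=> oA Ax; apply: open_nbhs_nbhs; split. Qed.
Arguments onbhs {T x A}.

Lemma near_fin (T : Type) (I : choiceType) (F : set_system T) (A : set I)
   (P : I -> set T) : Filter F -> finite_set A ->
  (forall i, A i -> F (P i)) -> F [set x | forall i, A i -> P i x].
Proof.
move=> FF /finite_fsetP [E ->] H.
have := @filter_bigI T I E P F FF (fun i iE => H i iE).
by apply: filterS => x Hx i iE; apply: Hx.
Qed.

Lemma pnbhs (X Y : topologicalType) (x : X) (y : Y) (A : set X) (B : set Y)
  (P : set (X * Y)) :
  nbhs x A -> nbhs y B -> (forall a b, A a -> B b -> P (a, b)) -> nbhs (x, y) P.
Proof.
move=> nA nB H; have : nbhs (x, y) (A `*` B) by exists (A, B).
by apply: filterS => -[a b] [/= Aa Bb]; apply: H.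
Qed.

Theorem proposition3p10 (G G0 Z : topologicalType)
    (s r : G -> G0) (u : G0 -> G) (mul : G -> G -> G) (inv : G -> G)
    (p : Z -> G0) (act : Z -> G -> Z) :
  is_top_groupoid s r u mul inv ->
  hausdorff_space G0 ->
  (forall A : set G, open A -> open (r @` A)) ->
  locally_compact_sp Z ->
  is_right_action s r u mul p act ->
  exists (Hp : HZ Z -> G0) (Hact : HZ Z -> G -> HZ Z),
    [/\ continuous Hp /\ (forall S, hz_set S `<=` p @^-1` [set Hp S]),
        (forall Hp' : HZ Z -> G0, continuous Hp' ->
           (forall S, hz_set S `<=` p @^-1` [set Hp' S]) -> Hp' = Hp),
        (forall S g, r g = Hp S ->
           hz_set (Hact S g) = [set act z g | z in hz_set S]),
        is_right_action s r u mul Hp Hact &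
        (forall z g, p z = r g ->
           Hp (hz_pt z) = p z /\ Hact (hz_pt z) g = hz_pt (act z g))].
Proof.
move=> [Hu [Hsr [Hass [Hid [Hinv [[sc rc uc invc] mulc]]]]]] hG0 ropen lcZ
  [pc pact actu actass actc].
have pco := proj1 (continuousP p) pc.
have fiber : forall (S : HZ Z) z1 z2, hz_set S z1 -> hz_set S z2 -> p z1 = p z2.
  move=> S z1 z2 h1 h2; apply: hG0 => A B nA nB.
  have := proj2 (hz_prop S) ([set p @^-1` A°] `|` [set p @^-1` B°]).
  case.
  - by rewrite finite_setU; split; apply: finite_set1.
  - move=> V [->|->]; (split; first by apply: pco; apply: open_interior).
      by exists z1.
    by exists z2.
  move=> w Hw; exists (p w); split.
    by apply: interior_subset; apply: (Hw (p @^-1` A°)); left.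
  by apply: interior_subset; apply: (Hw (p @^-1` B°)); right.
pose pt := fun S : HZ Z => projT1 (cid (proj1 (hz_prop S))).
have ptS : forall S, hz_set S (pt S) := fun S => projT2 (cid (proj1 (hz_prop S))).
pose Hp := fun S => p (pt S).
have HpE : forall S z, hz_set S z -> p z = Hp S := fun S z h => fiber S z (pt S) h (ptS S).
have hz_ext : forall S T : HZ Z, hz_set S = hz_set T -> S = T.
  move=> [S hS] [T hT] /= e; subst T; congr MkHZ; exact: Prop_irrelevance.
have act_near : forall z g V, p z = r g -> open V -> V (act z g) ->
   exists2 W, open W /\ W z & exists2 N, nbhs g N &
     forall g' w, N g' -> W w -> p w = r g' -> V (act w g').
  move=> z g V e oV Vz.
  have := proj1 (subspace_continuousP _ _) actc (z, g) e V (onbhs oV Vz).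
  move=> [[A B] [nA nB] sub].
  exists A°; first by split; [exact: open_interior | exact: nA].
  exists B => // g' w Bg' /interior_subset Aw e'.
  exact: (sub (w, g') (conj Aw Bg') e').
have isH_img : forall S g, r g = Hp S -> isH [set act z g | z in hz_set S].
  move=> S g e; split; first by exists (act (pt S) g), (pt S).
  move=> F finF HF.
  have ex : forall V, exists W : set Z, F V ->
     (open W /\ W `&` hz_set S !=set0) /\ exists2 N, nbhs g N &
        forall g' w, N g' -> W w -> p w = r g' -> V (act w g').
    move=> V; case: (pselect (F V)) => FV; last by exists setT.
    have [oV [y [Vy [z Sz ezy]]]] := HF V FV.
    have ez : p z = r g by rewrite e (HpE S z Sz).
    have Vz : V (act z g) by rewrite ezy.
    have [W [oW Wz] HW] := act_near z g V ez oV Vz.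
    by exists W => _; split => //; split => //; exists z.
  have [Wf HWf] := choice ex.
  have nN : nbhs g [set g' | forall V, F V -> forall w, Wf V w -> p w = r g' -> V (act w g')].
    apply: near_fin => // V FV.
    have [_ [N nN HN]] := HWf V FV.
    by apply: filterS nN => g' Ng' w Ww e'; apply: HN.
  pose N := [set g' | forall V, F V -> forall w, Wf V w -> p w = r g' -> V (act w g')]°.
  have oU : open (r @` N) by apply: ropen; apply: open_interior.
  have := proj2 (hz_prop S) ((Wf @` F) `|` [set p @^-1` (r @` N)]).
  case.
  - by rewrite finite_setU; split; [apply: finite_image | apply: finite_set1].
  - move=> V [[V0 FV0 <-]|->]; first by have [] := HWf V0 FV0.
    split; first exact: pco.
    by exists (pt S); split => //; exists g.
  move=> w Hw.
  have [g' Ng' eg'] : (r @` N) (p w) by apply: (Hw (p @^-1` (r @` N))); right.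
  exists (act w g') => V FV.
  apply: (interior_subset Ng') => //.
  by apply: (Hw (Wf V)); left; exists V.
pose Hact := fun S g => match pselect (r g = Hp S) with
   | left e => MkHZ (isH_img S g e) | right _ => S end.
have HactE : forall S g, r g = Hp S -> hz_set (Hact S g) = [set act z g | z in hz_set S].
  by move=> S g e; rewrite /Hact; case: pselect.
have Hpc : continuous Hp.
  apply/continuousP => A oA.
  have -> : Hp @^-1` A = [set S | hz_set S `&` (p @^-1` A) !=set0].
    apply/seteqP; split => S /=; first by move=> HA; exists (pt S).
    by move=> [z [Sz Az]]; rewrite -(HpE S z Sz).
  by apply: hz_open; left; exists (p @^-1` A); split => //; exact: pco.
have HpA : forall S g, Hp S = r g -> Hp (Hact S g) = s g.
  move=> S g e; rewrite -(HpE (Hact S g) (act (pt S) g)); first exact: pact.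
  by rewrite HactE //; exists (pt S).
exists Hp, Hact; split.
- by split => // S z Sz; apply: HpE.
- move=> Hp' _ H'; apply: funext => S.
  by have := H' S (pt S) (ptS S); rewrite /Hp => <-.
- exact: HactE.
- split => //.
  + move=> S; apply: hz_ext; rewrite HactE; last by rewrite (proj2 (Hu _)).
    apply/seteqP; split => z.
      by move=> [y Sy <-]; rewrite -(HpE S y Sy) actu.
    by move=> Sz; exists z => //; rewrite -(HpE S z Sz) actu.
  + move=> S g h e1 e2.
    have e3 : r h = Hp (Hact S g) by rewrite HpA.
    apply: hz_ext; rewrite HactE // HactE //.
    rewrite HactE; last by rewrite (proj2 (Hsr g h e2)).
    apply/seteqP; split => z.
      move=> [_ [y Sy <-] <-]; exists y => //; rewrite actass //.
      by rewrite (HpE S y Sy).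
    move=> [y Sy <-]; exists (act y g); first by exists y.
    by rewrite actass // (HpE S y Sy).
  + apply/subspace_continuousP => -[S g] /= e.
    apply: (@hz_cvg Z _ (Hact S g)) => B [[V [oV eB]] | [Q [cQ eB]]]; subst B => /=.
    * move=> [y []]; rewrite HactE // => -[z Sz <-] Vy.
      change (nbhs (S,g) [set xg : HZ Z * G | Hp xg.1 = r xg.2 ->
         hz_set (Hact xg.1 xg.2) `&` V !=set0]).
      have ez : p z = r g by rewrite (HpE S z Sz).
      have [W [oW Wz] [N nN HN]] := act_near z g V ez oV Vy.
      apply: (@pnbhs _ _ S g [set T | hz_set T `&` W !=set0] N) => //.
        apply: onbhs; first by apply: hz_open; left; exists W.
        by exists z.
      move=> T g' [w [Tw Ww]] Ng' /= eD.
      exists (act w g'); split; first by rewrite HactE //; exists w.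
      by apply: HN => //; rewrite (HpE T w Tw).
    * move=> HQ.
      change (nbhs (S,g) [set xg : HZ Z * G | Hp xg.1 = r xg.2 ->
         hz_set (Hact xg.1 xg.2) `&` Q = set0]).
      have Ff : Filter (within [set xg : HZ Z * G | Hp xg.1 = r xg.2] (nbhs (S, g))).
        exact: within_filter.
      have cov : forall q, Q q -> \forall q' \near q & i \near
          (within [set xg : HZ Z * G | Hp xg.1 = r xg.2] (nbhs (S, g))),
          (Hp i.1 = r i.2 -> ~ hz_set (Hact i.1 i.2) q').
        move=> q Qq.
        case: (pselect (p q = s g)) => pq; last first.
          have : ~ (forall A B, nbhs (p q) A -> nbhs (s g) B -> A `&` B !=set0).
            by move=> H; apply: pq; apply: hG0.
          move=> /existsNP [A /existsNP [B /not_implyP [nA /not_implyP [nB AB0]]]].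
          exists (p @^-1` A, [set i : HZ Z * G | Hp i.1 = r i.2 -> B (s i.2)]).
            split; first exact: (pc q _ nA).
            change (nbhs (S,g) [set i : HZ Z * G | Hp i.1 = r i.2 ->
               Hp i.1 = r i.2 -> B (s i.2)]).
            apply: (@pnbhs _ _ S g setT (s @^-1` B)).
            - exact: filterT.
            - exact: (sc g _ nB).
            - by move=> T g' _ Bg' _ _.
          move=> [q' [T g']] [/= Aq' M'] Di hq.
          move: hq; rewrite HactE; last by rewrite Di.
          move=> [t Tt eq].
          apply: AB0; exists (p q'); split => //.
          rewrite -eq pact //; first exact: M'.
          by rewrite (HpE T t Tt).
        have [Hi1 Hi2 Hi3 Hi4] := Hinv g.
        pose z := act q (inv g).
        have pqi : p q = r (inv g) by rewrite Hi2.
        have zq : act z g = q.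
          by rewrite /z actass // ?Hi1 // Hi4 -pq actu.
        have zS : ~ hz_set S z.
          move=> Sz; have : (hz_set (Hact S g) `&` Q) q.
            by split => //; rewrite HactE //; exists z.
          by rewrite HQ.
        have inv_back : forall t g', p t = r g' -> act (act t g') (inv g') = t.
          move=> t g' et; have [j1 j2 j3 j4] := Hinv g'.
          by rewrite actass // ?j2 // j3 -et actu.
        have back : forall X, open X -> X z -> exists2 O, nbhs q O &
            exists2 N, nbhs g N & forall g' y, N g' -> O y -> p y = s g' ->
              X (act y (inv g')).
          move=> X oX Xz.
          have [W [oW Wq] [N nN HN]] := act_near q (inv g) X pqi oX Xz.
          exists W; first exact: onbhs.
          exists (inv @^-1` N); first exact: (invc g _ nN).
          move=> g' y Ng' Wy e'; apply: HN => //.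
          by have [_ k2 _ _] := Hinv g'; rewrite k2.
        case: (pselect (exists s0 U V, hz_set S s0 /\ open U /\ open V /\ U z /\
                  V s0 /\ U `&` V = set0)).
        - move=> [s0 [U [V [S0 [oU [oV [Uz [Vs0 UV0]]]]]]]].
          have [Oq nO [N nN HON]] := back U oU Uz.
          exists (Oq, [set i : HZ Z * G | Hp i.1 = r i.2 ->
                   hz_set i.1 `&` V !=set0 /\ N i.2]).
            split => //.
            change (nbhs (S,g) [set i : HZ Z * G | Hp i.1 = r i.2 ->
               Hp i.1 = r i.2 -> hz_set i.1 `&` V !=set0 /\ N i.2]).
            apply: (@pnbhs _ _ S g [set T | hz_set T `&` V !=set0] N) => //.
              apply: onbhs; first by apply: hz_open; left; exists V.
              by exists s0.
          move=> [q' [T g']] [/= Oq' M'] Di hq.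
          have [TV Ng'] := M' Di.
          move: hq; rewrite HactE; last by rewrite Di.
          move=> [t Tt eq].
          have et : p t = r g' by rewrite (HpE T t Tt).
          have Ut : U t.
            rewrite -(inv_back t g' et) eq; apply: HON => //.
            by rewrite -eq pact.
          have := proj2 (hz_prop T) ([set U] `|` [set V]).
          case.
          + by rewrite finite_setU; split; apply: finite_set1.
          + move=> W0 [->|->]; split => //; first by exists t.
            by rewrite setIC.
          move=> w Hw; have : (U `&` V) w.
            by split; [apply: (Hw U); left | apply: (Hw V); right].
          by rewrite UV0.
        - move=> nex.
          have [K [nK cK hK]] := lcZ z.
          have KS : hz_set S `&` K = set0.
            rewrite -subset0 => y [Sy Ky].
            have yz : z <> y by move=> zy; apply: zS; rewrite zy.
            have [U [V [oU oV Uz Vy UVK]]] := hK z y (nbhs_singleton nK) Ky yz.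
            apply: nex; exists y, (U `&` K°), V; do !split => //.
              exact: openI oU (open_interior K).
            rewrite -subset0 => w [[Uw Kw] Vw].
            have : (U `&` V `&` K) w by split; [split|exact: interior_subset Kw].
            by rewrite UVK.
          have [Oq nO [N nN HON]] := back K° (open_interior K) nK.
          exists (Oq, [set i : HZ Z * G | Hp i.1 = r i.2 ->
                   hz_set i.1 `&` K = set0 /\ N i.2]).
            split => //.
            change (nbhs (S,g) [set i : HZ Z * G | Hp i.1 = r i.2 ->
               Hp i.1 = r i.2 -> hz_set i.1 `&` K = set0 /\ N i.2]).
            apply: (@pnbhs _ _ S g [set T | hz_set T `&` K = set0] N) => //.
              by apply: onbhs => //; apply: hz_open; right; exists K.
          move=> [q' [T g']] [/= Oq' M'] Di hq.
          have [TK Ng'] := M' Di.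
          move: hq; rewrite HactE; last by rewrite Di.
          move=> [t Tt eq].
          have et : p t = r g' by rewrite (HpE T t Tt).
          have Kt : K t.
            apply: interior_subset.
            rewrite -(inv_back t g' et) eq; apply: HON => //.
            by rewrite -eq pact.
          have : (hz_set T `&` K) t by [].
          by rewrite TK.
      have := proj1 (compact_near_coveringP Q) cQ (HZ Z * G)%type
        (within [set xg : HZ Z * G | Hp xg.1 = r xg.2] (nbhs (S, g)))
        (fun i q => Hp i.1 = r i.2 -> ~ hz_set (Hact i.1 i.2) q) Ff cov.
      move=> H.
      have H2 : nbhs (S, g) [set i : HZ Z * G | Hp i.1 = r i.2 -> Q `<=`
         (fun q => Hp i.1 = r i.2 -> ~ hz_set (Hact i.1 i.2) q)] := H.
      apply: (filterS _ H2) => -[T g'] /= H' DT.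
      by rewrite -subset0 => q [hq Qq]; apply: (H' DT q Qq DT hq).
- move=> z g e; have e' : p z = Hp (hz_pt z) by apply: HpE.
  split; first by [].
  by apply: hz_ext; rewrite HactE /= ?image_set1 // -e'.
Qed.
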